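(* Let $1\le r\le n$, let $g$ be a real-valued function differentiable on an open neighbourhood of $\mathrm{St}(r,n,\mathbb{C})$ in $\mathbb{C}^{n\times r}$, and let $\tilde g(Z)=g(\sigma(Z))$, where $\sigma$ keeps the first $r$ columns. Let $U_*\in\mathcal{U}_n$ and $X_*=\sigma(U_* )\in\mathrm{St}(r,n,\mathbb{C})$. Then $\operatorname{grad}\tilde g(U_* )=0$ if and only if $\operatorname{grad}g(X_* )=0$.
   Context: $\mathrm{St}(r,n,\mathbb{C})=\{X\in\mathbb{C}^{n\times r}:X^HX=I_r\}$ and $\mathcal{U}_n=\mathrm{St}(n,n,\mathbb{C})$. $\mathbb{C}^{n\times r}$ is a real Euclidean space with inner product $\mathrm{Re}\,\mathrm{tr}(X^HY)$; the Euclidean gradient of a real function $F$ is $\nabla F(X)=\frac{\partial F}{\partial X^{\Re}}+\mathrm{i}\frac{\partial F}{\partial X^{\Im}}$. With $\mathrm{skew}(P)=\frac12(P-P^H)$, the Riemannian gradient on the Stiefel manifold is $\operatorname{grad}g(X)=(I_n-XX^H)\nabla g(X)+X\,\mathrm{skew}(X^H\nabla g(X))$, and on $\mathcal{U}_n$ it is $\operatorname{grad}\tilde g(U)=U\,\mathrm{skew}(U^H\nabla\tilde g(U))$. *)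

(* Defs.v *)
From mathcomp Require Import all_boot all_order all_algebra.
From mathcomp Require Import boolp reals.
From mathcomp.real_closed Require Import complex.
Set Implicit Arguments. Unset Strict Implicit. Unset Printing Implicit Defensive.
Import Order.TTheory GRing.Theory Num.Theory.
Local Open Scope ring_scope.

Section Defs.
Variable R : realType.
Local Notation C := (R[i]).

Definition mxH (m p : nat) (A : 'M[C]_(m, p)) : 'M[C]_(p, m) :=
  (map_mx (@conjc R) A)^T.

Definition rinner (m p : nat) (A B : 'M[C]_(m, p)) : R :=
  complex.Re (\tr (mxH A *m B)).

Definition nrm2 (m p : nat) (A : 'M[C]_(m, p)) : R := rinner A A.

Definition skewH (p : nat) (P : 'M[C]_p) : 'M[C]_p :=
  (2%:R)^-1 *: (P - mxH P).

Definition stiefel (m p : nat) (X : 'M[C]_(m, p)) : Prop :=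
  mxH X *m X = 1%:M.

(* G is the Euclidean gradient of F : C^{m x p} -> R at X (Frechet sense,
   w.r.t. the real inner product Re tr(G^H H) and the Frobenius norm):
   |F(X+H) - F(X) - <G,H>| = o(||H||), written with squared quantities. *)
Definition is_egrad (m p : nat) (F : 'M[C]_(m, p) -> R) (X G : 'M[C]_(m, p))
  : Prop :=
  forall eps : R, 0 < eps -> exists2 d : R, 0 < d &
    forall H : 'M[C]_(m, p), nrm2 H < d ->
      (F (X + H) - F X - rinner G H) ^+ 2 <= eps * nrm2 H.

Definition differentiable_at (m p : nat) (F : 'M[C]_(m, p) -> R) X : Prop :=
  exists G, is_egrad F X G.

(* the Euclidean gradient nabla F(X) (0 if F is not differentiable at X) *)
Definition egrad (m p : nat) (F : 'M[C]_(m, p) -> R) (X : 'M[C]_(m, p))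
  : 'M[C]_(m, p) :=
  match pselect (exists G, is_egrad F X G) with
  | left h => projT1 (cid h)
  | right _ => 0
  end.

Definition mx_open (m p : nat) (O : 'M[C]_(m, p) -> Prop) : Prop :=
  forall X, O X -> exists2 d : R, 0 < d &
    forall Y, nrm2 (Y - X) < d -> O Y.

Definition rgrad_stiefel (m p : nat) (F : 'M[C]_(m, p) -> R) (X : 'M[C]_(m, p))
  : 'M[C]_(m, p) :=
  (1%:M - X *m mxH X) *m egrad F X + X *m skewH (mxH X *m egrad F X).

Definition rgrad_unitary (m : nat) (F : 'M[C]_m -> R) (U : 'M[C]_m)
  : 'M[C]_m :=
  U *m skewH (mxH U *m egrad F U).

Definition sigma (n r : nat) (hrn : (r <= n)%N) (Z : 'M[C]_n) : 'M[C]_(n, r) :=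
  \matrix_(i < n, j < r) Z i (widen_ord hrn j).

End Defs.

(* Main.v *)
Require Import Defs.
From mathcomp Require Import all_boot all_order all_algebra.
From mathcomp Require Import boolp reals.
From mathcomp.real_closed Require Import complex.
From mathcomp Require Import lra.
Import Order.TTheory GRing.Theory Num.Theory.
Local Open Scope ring_scope.
Set Implicit Arguments. Unset Strict Implicit.

Section H.
Variable R : realType.
Local Notation C := (R[i]).

Lemma mxH_mul m p q (A : 'M[C]_(m,p)) (B : 'M[C]_(p,q)) :
  mxH (A *m B) = mxH B *m mxH A.
Proof. by rewrite /mxH map_mxM trmx_mul. Qed.

Lemma mxHK m p (A : 'M[C]_(m,p)) : mxH (mxH A) = A.
Proof. by apply/matrixP=> i j; rewrite /mxH !mxE conjcK. Qed.

Lemma mxHD m p (A B : 'M[C]_(m,p)) : mxH (A + B) = mxH A + mxH B.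
Proof. by rewrite /mxH map_mxD linearD. Qed.

Lemma mxHN m p (A : 'M[C]_(m,p)) : mxH (- A) = - mxH A.
Proof. by rewrite /mxH map_mxN linearN. Qed.

Lemma mxHB m p (A B : 'M[C]_(m,p)) : mxH (A - B) = mxH A - mxH B.
Proof. by rewrite mxHD mxHN. Qed.

Lemma mxH1 m : mxH (1%:M : 'M[C]_m) = 1%:M.
Proof. by rewrite /mxH map_mx1 trmx1. Qed.

Lemma mxHZ m p (c : C) (A : 'M[C]_(m,p)) : mxH (c *: A) = conjc c *: mxH A.
Proof. by apply/matrixP=> i j; rewrite /mxH !mxE rmorphM. Qed.

Definition fc (a : C) : R := complex.Re (conjc a * a).

Lemma fc_ge0 a : 0 <= fc a.
Proof. case: a => a b; rewrite /fc /=. nra. Qed.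

Lemma fc_eq0 a : fc a = 0 -> a = 0.
Proof. case: a => a b; rewrite /fc /= => h.
have ha : a = 0 by nra. have hb : b = 0 by nra. by rewrite ha hb. Qed.

Lemma ReD (a b : C) : complex.Re (a + b) = complex.Re a + complex.Re b.
Proof. by case: a; case: b. Qed.

Lemma Re_sum I (r : seq I) P (F : I -> C) :
  complex.Re (\sum_(i <- r | P i) F i) = \sum_(i <- r | P i) complex.Re (F i).
Proof. by elim/big_rec2: _ => // i y1 y2 _ <-; rewrite ReD. Qed.

Lemma nrm2E m p (A : 'M[C]_(m,p)) : nrm2 A = \sum_j \sum_i fc (A i j).
Proof.
rewrite /nrm2 /rinner /mxtrace Re_sum; apply: eq_bigr => j _.
by rewrite mxE Re_sum; apply: eq_bigr => i _; rewrite /mxH !mxE.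
Qed.

Variables (n r : nat) (hrn : (r <= n)%N).

Lemma widen_inj : injective (widen_ord hrn).
Proof. by move=> a b h; apply: val_inj; exact: (congr1 val h). Qed.

Definition Sm : 'M[C]_(n, r) := \matrix_(k, j) ((k == widen_ord hrn j)%:R).

Lemma mulS m (A : 'M[C]_(m, n)) i j : (A *m Sm) i j = A i (widen_ord hrn j).
Proof.
rewrite mxE (bigD1 (widen_ord hrn j)) //= big1 ?addr0; first by rewrite mxE eqxx mulr1.
by move=> k /negbTE hk; rewrite mxE hk mulr0.
Qed.

Lemma sigmaE (Z : 'M[C]_n) : sigma hrn Z = Z *m Sm.
Proof. by apply/matrixP=> i j; rewrite mulS mxE. Qed.

Lemma mxHS : mxH Sm = Sm^T.
Proof. by apply/matrixP=> i j; rewrite /mxH !mxE conjc_nat. Qed.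

Lemma StS : mxH Sm *m Sm = 1%:M.
Proof.
apply/matrixP=> i j; rewrite mulS mxHS !mxE.
by rewrite (inj_eq widen_inj) eq_sym.
Qed.

Lemma rinner_pad (G : 'M[C]_(n, r)) (K : 'M[C]_n) :
  rinner (G *m mxH Sm) K = rinner G (K *m Sm).
Proof.
by rewrite /rinner mxH_mul mxHK -mulmxA mxtrace_mulC -mulmxA.
Qed.

Lemma nrm2_S (K : 'M[C]_n) : nrm2 (K *m Sm) <= nrm2 K.
Proof.
rewrite !nrm2E.
set F := fun k : 'I_n => \sum_i fc (K i k).
have -> : \sum_j \sum_i fc ((K *m Sm) i j) = \sum_j F (widen_ord hrn j).
  by apply: eq_bigr => j _; apply: eq_bigr => i _; rewrite mulS.
have F0 k : 0 <= F k by apply: sumr_ge0 => i _; apply: fc_ge0.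
rewrite (eq_bigl (fun j => j \in [set: 'I_r])); last by move=> j; rewrite in_setT.
rewrite -(big_imset F (A := [set: 'I_r])); last first.
  by move=> a b _ _; apply: widen_inj.
rewrite [X in _ <= X](bigID (mem (widen_ord hrn @: [set: 'I_r]))) /=.
rewrite -[X in X <= _]addr0; apply: lerD; first exact: lexx.
by apply: sumr_ge0 => k _; apply: F0.
Qed.

Lemma ReB (a b : C) : complex.Re (a - b) = complex.Re a - complex.Re b.
Proof. by case: a; case: b. Qed.

Lemma ReRM (t : R) (z : C) : complex.Re ((t%:C)%C * z) = t * complex.Re z.
Proof. by case: z => a b /=; rewrite mul0r subr0. Qed.

Lemma rinnerBl m p (A B K : 'M[C]_(m, p)) :
  rinner (A - B) K = rinner A K - rinner B K.
Proof. by rewrite /rinner mxHB mulmxBl linearB ReB. Qed.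

Lemma rinnerZr m p (A : 'M[C]_(m, p)) (t : R) :
  rinner A ((t%:C)%C *: A) = t * nrm2 A.
Proof. by rewrite /nrm2 /rinner -scalemxAr mxtraceZ ReRM. Qed.

Lemma nrm2Z m p (A : 'M[C]_(m, p)) (t : R) :
  nrm2 ((t%:C)%C *: A) = t ^+ 2 * nrm2 A.
Proof.
rewrite /nrm2 /rinner mxHZ conjc_real -scalemxAr -scalemxAl !mxtraceZ.
by rewrite mulrA -rmorphM ReRM.
Qed.

Lemma nrm2_ge0 m p (A : 'M[C]_(m, p)) : 0 <= nrm2 A.
Proof. by rewrite nrm2E; apply: sumr_ge0 => j _; apply: sumr_ge0 => i _; apply: fc_ge0. Qed.

Lemma nrm2_eq0 m p (A : 'M[C]_(m, p)) : nrm2 A = 0 -> A = 0.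
Proof.
rewrite nrm2E => /eqP; rewrite psumr_eq0; last first.
  by move=> j _; apply: sumr_ge0 => i _; apply: fc_ge0.
move=> /allP h; apply/matrixP=> i j; rewrite mxE.
have := h j (mem_index_enum j); rewrite /= psumr_eq0; last by move=> *; apply: fc_ge0.
by move=> /allP/(_ i (mem_index_enum i)) /= /eqP /fc_eq0.
Qed.

Lemma egrad_uniq m p (F : 'M[C]_(m, p) -> R) X G1 G2 :
  is_egrad F X G1 -> is_egrad F X G2 -> G1 = G2.
Proof.
move=> h1 h2; apply/eqP; rewrite -subr_eq0; apply/eqP.
set D := G1 - G2; set N := nrm2 D.
have N0 : 0 <= N by apply: nrm2_ge0.
case: (eqVneq N 0) => [/nrm2_eq0 // | NN0].
have Np : 0 < N by rewrite lt_neqAle eq_sym NN0 N0.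
have ep : 0 < N / 8%:R by rewrite divr_gt0 // ltr0n.
have [d1 d1p hd1] := h1 _ ep; have [d2 d2p hd2] := h2 _ ep.
set dm := Num.min d1 d2.
have dmp : 0 < dm by rewrite lt_min d1p d2p.
have dm1 : dm <= d1 by rewrite ge_min lexx.
have dm2 : dm <= d2 by rewrite ge_min lexx orbT.
set t := dm / (dm + 2 * N + 2).
have den : 0 < dm + 2 * N + 2 by lra.
have ht : t * (dm + 2 * N + 2) = dm by rewrite /t mulfVK // gt_eqF.
have tp : 0 < t by rewrite /t divr_gt0.
have hH : nrm2 ((t%:C)%C *: D) < dm by rewrite nrm2Z; nra.
have e1 := hd1 _ (lt_le_trans hH dm1).
have e2 := hd2 _ (lt_le_trans hH dm2).
move: e1 e2; rewrite nrm2Z.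
set a := F (X + _) - F X.
have -> : rinner G1 ((t%:C)%C *: D) = rinner G2 ((t%:C)%C *: D) + t * N.
  by rewrite -rinnerZr -[X in X = _](subrK (rinner G2 ((t%:C)%C *: D))) -rinnerBl addrC.
set b := rinner G2 _ => e1 e2.
exfalso; rewrite -/N in e1 e2.
have tN : 0 < t * N by apply: mulr_gt0.
have q := sqr_ge0 (2 * a - 2 * b - t * N).
have : (t * N) ^+ 2 <= 2 * ((a - (b + t * N)) ^+ 2 + (a - b) ^+ 2) by nra.
nra.
Qed.

Lemma skew0 p (M : 'M[C]_p) : skewH M = 0 <-> M = mxH M.
Proof.
rewrite /skewH; split.
  move/eqP; rewrite scalemx_eq0 invr_eq0 pnatr_eq0 /= subr_eq0 => /eqP //.
by move=> <-; rewrite subrr scaler0.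
Qed.

Lemma unit_mul0 m p (U : 'M[C]_m) (A : 'M[C]_(m, p)) :
  mxH U *m U = 1%:M -> (U *m A = 0 <-> A = 0).
Proof.
move=> hU; split; last by move=> ->; rewrite mulmx0.
by move=> h; rewrite -[A]mul1mx -hU -mulmxA h mulmx0.
Qed.

Lemma stiefel_grad0 m p (X : 'M[C]_(m, p)) (G : 'M[C]_(m, p)) :
  mxH X *m X = 1%:M ->
  ((1%:M - X *m mxH X) *m G + X *m skewH (mxH X *m G) = 0 <->
   (1%:M - X *m mxH X) *m G = 0 /\ skewH (mxH X *m G) = 0).
Proof.
move=> hX; split; last by case=> -> ->; rewrite mulmx0 addr0.
move=> h.
have h0 : mxH X *m (1%:M - X *m mxH X) = 0.
  by rewrite mulmxBr mulmx1 mulmxA hX mul1mx subrr.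
have hs : skewH (mxH X *m G) = 0.
  have := congr1 (mulmx (mxH X)) h.
  by rewrite mulmxDr mulmx0 !mulmxA h0 mul0mx add0r hX mul1mx.
by split=> //; move: h; rewrite hs mulmx0 addr0.
Qed.

End H.

Unset Implicit Arguments. Set Strict Implicit.

Theorem theorem2p7 (R : realType) (n r : nat) (hr1 : (1 <= r)%N)
  (hrn : (r <= n)%N) (g : 'M[R[i]]_(n, r) -> R)
  (hg : exists O : 'M[R[i]]_(n, r) -> Prop,
          [/\ mx_open O,
              (forall X, stiefel X -> O X) &
              (forall X, O X -> differentiable_at g X)])
  (Ustar : 'M[R[i]]_n) (hU : stiefel Ustar) :
  let gt := fun Z : 'M[R[i]]_n => g (sigma hrn Z) in
  let Xstar := sigma hrn Ustar in
  rgrad_unitary gt Ustar = 0 <-> rgrad_stiefel g Xstar = 0.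
Proof.
move=> gt Xs.
set S := Sm R hrn.
set U := Ustar.
have XsE : Xs = U *m S by rewrite /Xs sigmaE.
have UUH : U *m mxH U = 1%:M by apply: mulmx1C; exact: hU.
have SS : mxH S *m S = 1%:M by apply: StS.
have stX : stiefel Xs.
  by rewrite /stiefel XsE mxH_mul -mulmxA (mulmxA (mxH U)) hU mul1mx.
have [O [_ hO hd]] := hg.
have [G hG] := hd _ (hO _ stX).
have egX : egrad g Xs = G.
  rewrite /egrad; case: pselect => [h|h]; last by exfalso; apply: h; exists G.
  by case: (cid h) => G' hG' /=; apply: egrad_uniq hG' hG.
have hGp : is_egrad gt U (G *m mxH S).
  move=> eps ep; have [d dp hdd] := hG eps ep; exists d => // K hK.
  have hK' : nrm2 (K *m S) < d by apply: le_lt_trans (nrm2_S hrn K) hK.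
  rewrite /gt !sigmaE -/S mulmxDl -XsE rinner_pad.
  apply: le_trans (hdd _ hK') _.
  by apply: ler_wpM2l; [exact: ltW | exact: nrm2_S].
have egU : egrad gt U = G *m mxH S.
  rewrite /egrad; case: pselect => [h|h]; last by exfalso; apply: h; exists (G *m mxH S).
  by case: (cid h) => G' hG' /=; apply: egrad_uniq hG' hGp.
rewrite /rgrad_unitary /rgrad_stiefel egU egX unit_mul0 // skew0.
rewrite stiefel_grad0 -?XsE //= skew0 XsE.
rewrite !mxH_mul !mxHK.
have SSr Z : mxH S *m (S *m Z) = Z :> 'M_(r, _) by rewrite mulmxA SS mul1mx.
split.
- move=> hM.
  have h1 : mxH U *m G = S *m (mxH G *m (U *m S)).
    have := congr1 (mulmx^~ S) hM; rewrite /= -!mulmxA SS mulmx1 => ->.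
    by rewrite !mulmxA.
  split.
  + rewrite mulmxBl mul1mx; apply/eqP; rewrite subr_eq0; apply/eqP.
    rewrite -!mulmxA h1 SSr -h1 mulmxA UUH mul1mx //.
  + by rewrite -!mulmxA h1 SSr.
- case=> h1 h2.
  have e : G = U *m (S *m (mxH S *m (mxH U *m G))).
    move: h1; rewrite mulmxBl mul1mx => /eqP; rewrite subr_eq0 => /eqP {1}->.
    by rewrite !mulmxA.
  have hA : mxH U *m G = S *m (mxH S *m (mxH U *m G)).
    by rewrite {1}e mulmxA hU mul1mx.
  set A := mxH S *m (mxH U *m G).
  have hAA : mxH A = A.
    by rewrite /A !mxH_mul !mxHK -mulmxA -h2 mulmxA.
  have -> : S *m mxH G *m U = mxH (mxH U *m G *m mxH S).
    by rewrite !mxH_mul !mxHK mulmxA.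
  by rewrite mulmxA hA !mxH_mul !mxHK -(mulmxA (mxH G)) -h2 !mulmxA.
Qed.
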